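(* Consider the hard core model with a fixed vertex activity $\lambda>0$, let $\phi(x)=\sinh^{-1}(\sqrt x)$, so $\Phi(x)=\phi'(x)=\frac{1}{2\sqrt{x(1+x)}}$, and let $d$ be a positive integer. Let $\xi(d)=\sup_{x\ge0}\Xi(d,x)$ where $\Xi(d,x)=d\left(\frac{\Phi(f_{d,\lambda}(x))f_{d,\lambda}(x)}{(1+x)\Phi(x)}\right)^2$ and $f_{d,\lambda}(x)=\lambda/(1+x)^d$. Then the equation $d\,x=1+f_{d,\lambda}(x)$ has a unique positive solution $\tilde x_\lambda(d)$, and $\xi(d)=\Xi(d,\tilde x_\lambda(d))$. *)

(* Defs.v *)
From HB Require Import structures.
From mathcomp Require Import all_boot all_order all_algebra.
From mathcomp Require Import all_classical all_reals ereal.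
Set Implicit Arguments. Unset Strict Implicit. Unset Printing Implicit Defensive.
Import Order.TTheory GRing.Theory Num.Theory.
Local Open Scope ring_scope.

Definition hc_f {R : realType} (lambda : R) (d : nat) (x : R) : R :=
  lambda / (1 + x) ^+ d.

(* Phi(x) = phi'(x) = 1 / (2 sqrt(x(1+x))), phi = arsinh(sqrt x).
   (At x = 0 MathComp's convention 0^-1 = 0 applies.) *)
Definition hc_Phi {R : realType} (x : R) : R :=
  1 / (2 * Num.sqrt (x * (1 + x))).

Definition hc_Xi {R : realType} (lambda : R) (d : nat) (x : R) : R :=
  d%:R * (hc_Phi (hc_f lambda d x) * hc_f lambda d x / ((1 + x) * hc_Phi x)) ^+ 2.

(* xi(d) = sup_{x >= 0} Xi(d,x), as an extended real (so unboundedness is not hidden). *)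
Definition hc_xi {R : realType} (lambda : R) (d : nat) : \bar R :=
  ereal_sup [set (hc_Xi lambda d x)%:E | x in [set x : R | 0 <= x]%classic].

(* Main.v *)
Require Import Defs.
From HB Require Import structures.
From mathcomp Require Import all_boot all_order all_algebra.
From mathcomp Require Import all_classical all_reals ereal.
From mathcomp Require Import topology normedtype derive.
From mathcomp Require Import ring lra.
Import numFieldTopology.Exports numFieldNormedType.Exports.
Import Order.TTheory GRing.Theory Num.Theory.
Local Open Scope ring_scope.

Lemma bern (R : realFieldType) (n : nat) (a b : R) : 0 <= a -> 0 <= b ->
  b ^+ n * (b + n%:R * (a - b)) <= a ^+ n * b.
Proof.
move=> ha hb; elim: n => [|n IH]; first by rewrite !expr0 mul0r addr0 !mul1r.
have h1 : a * (b ^+ n * (b + n%:R * (a - b))) <= a * (a ^+ n * b).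
  exact: ler_wpM2l.
have h2 : 0 <= b ^+ n * (n%:R * (a - b) ^+ 2).
  by apply: mulr_ge0; [exact: exprn_ge0 | apply: mulr_ge0; [exact: ler0n|exact: sqr_ge0]].
rewrite !exprS -natr1.
have e : a * (a ^+ n * b) = a * a ^+ n * b by ring.
rewrite -e; apply: le_trans h1.
have : a * (b ^+ n * (b + n%:R * (a - b))) - b * b ^+ n * (b + (n%:R + 1) * (a - b))
   = b ^+ n * (n%:R * (a - b) ^+ 2) by ring.
lra.
Qed.

Lemma Xi_pos (R : realType) (lambda : R) (d : nat) (x : R) : 0 < lambda -> 0 < x ->
  hc_Xi lambda d x = d%:R * (x * hc_f lambda d x / ((1 + x) * (1 + hc_f lambda d x))).
Proof.
move=> hl hx; rewrite /hc_Xi /hc_Phi.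
set f := hc_f lambda d x.
have hf : 0 < f by rewrite /f /hc_f divr_gt0 // exprn_gt0 // ltr_wpDr // ltW.
congr (_ * _).
set s1 := Num.sqrt (f * (1 + f)); set s2 := Num.sqrt (x * (1 + x)).
have p1 : 0 < s1 by rewrite sqrtr_gt0 mulr_gt0 // ltr_wpDr // ltW.
have p2 : 0 < s2 by rewrite sqrtr_gt0 mulr_gt0 // ltr_wpDr // ltW.
have q : 0 < 1 + x by rewrite ltr_wpDr // ltW.
have qf : 0 < 1 + f by rewrite ltr_wpDr // ltW.
have e1 : s1 ^+ 2 = f * (1 + f) by rewrite sqr_sqrtr // ltW // mulr_gt0.
have e2 : s2 ^+ 2 = x * (1 + x) by rewrite sqr_sqrtr // ltW // mulr_gt0.
have -> : 1 / (2 * s1) * f / ((1 + x) * (1 / (2 * s2))) = f * s2 / (s1 * (1 + x)).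
  by field; rewrite ?gt_eqF.
clearbody f s1 s2. rewrite expr_div_n !exprMn e1 e2; field; rewrite ?gt_eqF //.
Qed.

Lemma Xi_0 (R : realType) (lambda : R) (d : nat) : hc_Xi lambda d 0 = 0.
Proof.
by rewrite /hc_Xi /hc_Phi mul0r sqrtr0 mulr0 invr0 mulr0 mulr0 invr0 mulr0 expr0n mulr0.
Qed.

Lemma key (R : realFieldType) (l x t P Q dn : R) : 0 < l -> 0 < x -> 0 < t ->
  0 < P -> 0 < Q -> 0 <= dn ->
  Q * (1 + t + dn * (x - t)) <= P * (1 + t) -> dn * t * Q = Q + l ->
  x * l / ((1 + x) * (P + l)) <= t * l / ((1 + t) * (Q + l)).
Proof.
move=> hl hx ht hP hQ hdn Hb Hr.
have D1 : 0 < (1 + x) * (P + l) by apply: mulr_gt0; lra.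
have D2 : 0 < (1 + t) * (Q + l) by apply: mulr_gt0; lra.
rewrite ler_pdivlMr // mulrAC ler_pdivrMr //.
set B := t * (1 + x) * (P + l) - x * (1 + t) * (Q + l).
have El : l = dn * t * Q - Q by lra.
have E : (1 + t) * B = t * (1 + x) * (P * (1 + t) - Q * (1 + t + dn * (x - t)))
   + dn * Q * t * (t - x) ^+ 2 by rewrite /B El; ring.
have hB1 : 0 <= (1 + t) * B.
  rewrite E; apply: addr_ge0.
    apply: mulr_ge0; first by apply: mulr_ge0; lra.
    lra.
  apply: mulr_ge0; last exact: sqr_ge0.
  apply: mulr_ge0; last lra. apply: mulr_ge0; lra.
have hB : 0 <= B by rewrite -(pmulr_rge0 _ (_ : 0 < 1 + t)) //; lra.
have : 0 <= l * B by apply: mulr_ge0; lra.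
have -> : l * B = t * l * ((1 + x) * (P + l)) - x * l * ((1 + t) * (Q + l)) by rewrite /B; ring.
lra.
Qed.

Lemma f_eq (R : realType) (lambda : R) (d : nat) (x : R) : 0 <= x -> 0 < lambda ->
  x * hc_f lambda d x / ((1 + x) * (1 + hc_f lambda d x)) =
  x * lambda / ((1 + x) * ((1 + x) ^+ d + lambda)).
Proof.
move=> hx hl; rewrite /hc_f.
have hP : 0 < (1 + x) ^+ d by rewrite exprn_gt0 //; lra.
have h1 : 0 < 1 + x by lra.
have h2 : 0 < (1 + x) ^+ d + lambda by lra.
have h3 : 0 < 1 + lambda / (1 + x) ^+ d by have := divr_gt0 hl hP; lra.
field; rewrite ?gt_eqF //.
Qed.

Lemma fmono (R : realType) (lambda : R) (d : nat) (y z : R) : 0 < lambda -> 0 <= y -> y <= z ->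
  hc_f lambda d z <= hc_f lambda d y.
Proof.
move=> hl hy hyz; rewrite /hc_f.
have hPy : 0 < (1 + y) ^+ d by rewrite exprn_gt0 //; lra.
have hPz : 0 < (1 + z) ^+ d by rewrite exprn_gt0 //; lra.
have hle : (1 + y) ^+ d <= (1 + z) ^+ d by apply: lerXn2r; rewrite ?nnegrE; lra.
apply: ler_wpM2l; first lra.
by rewrite lef_pV2 ?posrE.
Qed.

Theorem lemma4p2 (R : realType) (lambda : R) (d : nat)
  (hlambda : 0 < lambda) (hd : (0 < d)%N) :
  exists xt : R,
    (0 < xt /\ d%:R * xt = 1 + hc_f lambda d xt) /\
    (forall y : R, 0 < y -> d%:R * y = 1 + hc_f lambda d y -> y = xt) /\
    hc_xi lambda d = (hc_Xi lambda d xt)%:E.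
Proof.
have hdR : 0 < d%:R :> R by rewrite ltr0n.
pose p : {poly R} := ('X + 1) ^+ d * (d%:R *: 'X - 1) - lambda%:P.
have hp : forall x, p.[x] = (1 + x) ^+ d * (d%:R * x - 1) - lambda.
  by move=> x; rewrite /p !hornerE (addrC x).
pose b := (1 + lambda) / d%:R.
have hb0 : 0 <= b by apply: divr_ge0; lra.
have hdb : d%:R * b = 1 + lambda by rewrite /b mulrC divfK ?gt_eqF.
have hpb : 0 <= p.[b].
  rewrite hp; have -> : d%:R * b - 1 = lambda by lra.
  have : 1 <= (1 + b) ^+ d by apply: exprn_ege1; lra.
  nra.
have hp0 : p.[0] < 0 by rewrite hp addr0 expr1n mulr0; lra.
have [c cin hc] : exists2 c, c \in `[0, b] & p.[c] = 0.
  apply: IVT => //.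
    apply: continuous_subspaceT; exact: continuous_horner.
  rewrite ge_min le_max; apply/andP; split; apply/orP; [left|right]; lra.
have hc0 : 0 <= c by move: cin; rewrite in_itv /= => /andP[].
have hcpos : 0 < c.
  rewrite lt_neqAle hc0 andbT; apply/eqP => e; move: hc; rewrite -e; lra.
have hPc : 0 < (1 + c) ^+ d by rewrite exprn_gt0 //; lra.
have root_c : d%:R * c = 1 + hc_f lambda d c.
  rewrite /hc_f; move: hc; rewrite hp => hc.
  have -> : lambda = (1 + c) ^+ d * (d%:R * c - 1) by lra.
  by rewrite mulrAC divff ?gt_eqF // mul1r; lra.
exists c; split; first by split.
split.
  move=> y hy hry.
  case: (ltgtP y c) => // hyc.
    have := @fmono R lambda d y c hlambda (ltW hy) (ltW hyc).
    have : d%:R * y < d%:R * c by rewrite ltr_pM2l.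
    lra.
  have := @fmono R lambda d c y hlambda hc0 (ltW hyc).
  have : d%:R * c < d%:R * y by rewrite ltr_pM2l.
  lra.
have XiP : 0 <= hc_Xi lambda d c by apply: mulr_ge0; [exact: ler0n | exact: sqr_ge0].
apply/eqP; rewrite eq_le; apply/andP; split.
  apply: ge_ereal_sup => _ [x hx <-]; rewrite lee_fin.
  have hx0 : 0 <= x by exact: hx.
  have [->|xpos] := eqVneq x 0; first by rewrite Xi_0.
  have hxp : 0 < x by rewrite lt_neqAle eq_sym xpos.
  rewrite !Xi_pos // !f_eq //.
  apply: ler_wpM2l; first exact: ler0n.
  apply: (@key _ lambda x c _ _ d%:R) => //.
  - by rewrite exprn_gt0 //; lra.
  - have hb1 : 0 <= 1 + x by lra.
    have hb2 : 0 <= 1 + c by lra.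
    have := @bern R d (1 + x) (1 + c) hb1 hb2.
    by have -> : (1 + x) - (1 + c) = x - c by ring.
  - move: root_c; rewrite /hc_f => rc.
    have -> : d%:R * c * (1 + c) ^+ d = (d%:R * c) * (1 + c) ^+ d by [].
    by rewrite rc mulrDl mul1r divfK ?gt_eqF.
apply: ereal_sup_ubound; exists c => //; exact: ltW.
Qed.
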